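(* Let $X$ be a quasigeodesic metric space (e.g.\ a connected graph with its path metric) which is not coarsely equivalent to any metric space with bounded geometry. Then $h_\infty(X)=\infty$.
   Context: $X$ is quasigeodesic if there are $C\ge1,A\ge0$ such that any $x,x'$ are joined by a map $p\colon[0,d(x,x')]\to X$, $p(0)=x$, $p(d(x,x'))=x'$, with $C^{-1}|s-t|-A\le d(p(s),p(t))\le C|s-t|+A$. Bounded geometry: for every $r>0$ closed balls of radius $r$ have uniformly bounded cardinality. Coarse equivalence: a map $f$ with nondecreasing $\rho_\pm\colon[0,\infty)\to\mathbb R$, $\rho_-(r)\to\infty$, $\rho_-(d(x,x'))\le d(f(x),f(x'))\le\rho_+(d(x,x'))$, and coarsely dense image. Coarse entropy $h_\infty(X)=\lim_{\delta\to\infty}\lim_{R\to\infty}\limsup_{n\to\infty}\frac1n\log s(n,R,\delta,x_0)$, where $s(n,R,\delta,x_0)$ is the supremum of cardinalities of $R$-separated sets of $\delta$-paths $(x_0,\dots,x_n)$ ($d(x_i,x_{i+1})\le\delta$) starting at $x_0$, paths compared by $\max_i d(x_i,y_i)$. *)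

(* Defs.v *)
From HB Require Import structures.
From mathcomp Require Import all_boot all_order all_algebra.
From mathcomp Require Import all_classical all_reals all_analysis.
Set Implicit Arguments. Unset Strict Implicit. Unset Printing Implicit Defensive.
Import Order.TTheory GRing.Theory Num.Theory.
Import numFieldNormedType.Exports.
Local Open Scope classical_set_scope.
Local Open Scope ring_scope.

Section Defs.
Variable R : realType.

Definition is_metric (X : Type) (d : X -> X -> R) : Prop :=
  [/\ forall x y, 0 <= d x y,
      forall x y, d x y = 0 <-> x = y,
      forall x y, d x y = d y x &
      forall x y z, d x z <= d x y + d y z].

Definition quasigeodesic (X : Type) (d : X -> X -> R) : Prop :=
  exists C A : R, 1 <= C /\ 0 <= A /\
    forall x x' : X, exists p : R -> X,
      p 0 = x /\ p (d x x') = x' /\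
      forall s t, 0 <= s <= d x x' -> 0 <= t <= d x x' ->
        C^-1 * `|s - t| - A <= d (p s) (p t) <= C * `|s - t| + A.

Definition ball_card_le (X : Type) (d : X -> X -> R) (x : X) (r : R) (N : nat) :=
  forall (k : nat) (f : 'I_k -> X), injective f ->
    (forall i, d x (f i) <= r) -> (k <= N)%N.

Definition bounded_geometry (X : Type) (d : X -> X -> R) : Prop :=
  forall r : R, 0 < r -> exists N : nat, forall x : X, ball_card_le d x r N.

Definition nondecreasing_on_nonneg (rho : R -> R) : Prop :=
  forall a b, 0 <= a -> a <= b -> rho a <= rho b.

Definition coarse_equivalence (X Y : Type) (d : X -> X -> R) (e : Y -> Y -> R)
  (f : X -> Y) : Prop :=
  (exists rho_m rho_p : R -> R,
     [/\ nondecreasing_on_nonneg rho_m, nondecreasing_on_nonneg rho_p,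
         rho_m x @[x --> +oo] --> +oo &
         forall x x', rho_m (d x x') <= e (f x) (f x') <= rho_p (d x x')])
  /\ (exists K : R, forall y : Y, exists x : X, e y (f x) <= K).

Definition delta_path (X : Type) (d : X -> X -> R) (n : nat) (delta : R)
  (x0 : X) (p : 'I_n.+1 -> X) : Prop :=
  p ord0 = x0 /\ forall i : 'I_n, d (p (widen_ord (leqnSn n) i)) (p (lift ord0 i)) <= delta.

Definition path_dist (X : Type) (d : X -> X -> R) (n : nat) (p q : 'I_n.+1 -> X) : R :=
  \big[Num.max/0]_(i < n.+1) d (p i) (q i).

Definition sep_number (X : Type) (d : X -> X -> R) (n : nat) (Rr delta : R) (x0 : X)
  : \bar R :=
  ereal_sup [set (k%:R)%:E | k in [set k : nat | exists P : 'I_k -> ('I_n.+1 -> X),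
      [/\ injective P, forall j, delta_path d delta x0 (P j) &
          forall j j', j != j' -> Rr <= path_dist d (P j) (P j')]]].

Definition elog (x : \bar R) : \bar R :=
  match x with
  | EFin r => (ln r)%:E
  | +oo%E => +oo%E
  | -oo%E => -oo%E
  end.

Definition coarse_entropy (X : Type) (d : X -> X -> R) (x0 : X) : \bar R :=
  lim ((lim ((limn_esup (fun n : nat =>
            ((n%:R)^-1)%:E * elog (sep_number d n Rr delta x0)))%E
          @[Rr --> +oo])) @[delta --> +oo]).

End Defs.

(* Main.v *)
Require Import Defs.
From HB Require Import structures.
From mathcomp Require Import all_boot all_order all_algebra.
From mathcomp Require Import all_classical all_reals all_analysis.
From mathcomp Require Import lra zify.
Import Order.TTheory GRing.Theory Num.Theory.
Local Open Scope ring_scope.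
Local Open Scope classical_set_scope.
Set Implicit Arguments.

Section Aux.
Variables (R : realType) (X : Type) (d : X -> X -> R).
Hypothesis hm : is_metric d.

Lemma d_ge0 x y : 0 <= d x y. Proof. by case: hm. Qed.
Lemma d_xx x : d x x = 0. Proof. by case: hm => _ h _ _; apply: (proj2 (h x x)). Qed.
Lemma d_sym x y : d x y = d y x. Proof. by case: hm. Qed.
Lemma d_tri x y z : d x z <= d x y + d y z. Proof. by case: hm. Qed.
Lemma d_eq0 x y : d x y = 0 -> x = y. Proof. by case: hm => _ h _ _; apply: (proj1 (h x y)). Qed.

Lemma nat_above (x : R) : exists n : nat, x <= n%:R.
Proof. exists (Num.Def.archi_bound `|x|). apply: ltW; apply: le_lt_trans (unstable.ltr_norm_bound _).
  by rewrite normr_id ler_norm. Qed.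

Definition rsep (r : R) (N : set X) := forall a b, N a -> N b -> a <> b -> r <= d a b.

Lemma net_exists (r : R) : 0 < r ->
  exists N : set X, rsep r N /\ forall x, exists y, N y /\ d x y < r.
Proof.
move=> r0.
have [N [sN maxN]] : exists A, rsep r A /\ forall B, A `<` B -> ~ rsep r B.
  apply: Zorn_bigcup => F FP tot a b [A FA Aa] [B FB Bb] ab.
  have [AB|BA] := tot A B FA FB.
  + exact: (FP B FB) (AB _ Aa) Bb ab.
  + exact: (FP A FA) Aa (BA _ Bb) ab.
exists N; split => // x.
apply: contrapT => H.
have Hx : forall y, N y -> r <= d x y.
  move=> y Ny; rewrite leNgt; apply/negP => lt; apply: H; by exists y.
have nNx : ~ N x by move=> Nx; have := Hx x Nx; rewrite d_xx leNgt r0.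
apply: (maxN (N `|` [set x])).
- split; first by move=> y Ny; left.
  by move=> sub; apply: nNx; apply: sub; right.
- move=> a b [Na|->] [Nb|->] ab.
  + exact: sN.
  + by rewrite d_sym; apply: Hx.
  + exact: Hx.
  + by case: ab.
Qed.


Lemma key_sep :
  (forall (Y : Type) (e : Y -> Y -> R), is_metric e -> bounded_geometry e ->
     forall f : X -> Y, ~ coarse_equivalence d e f) ->
  forall r : R, 0 < r -> exists rho : R, 0 < rho /\ forall M : nat,
    exists (x : X) (z : 'I_M -> X), (forall i, d x (z i) <= rho) /\
       (forall i j, i != j -> r <= d (z i) (z j)).
Proof.
move=> hnb r r0.
have [N [sN cN]] := net_exists r r0.
pose Y := {x : X | N x}.
pose e (a b : Y) := d (sval a) (sval b).
pose g (x : X) : Y := exist _ (projT1 (cid (cN x))) (proj1 (projT2 (cid (cN x)))).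
have gP x : d x (sval (g x)) < r by exact: (proj2 (projT2 (cid (cN x)))).
have svalI (a b : Y) : sval a = sval b -> a = b.
  by case: a b => a Na [b Nb] /= ab; apply: eq_exist.
have em : is_metric e.
  split.
  - by move=> a b; exact: d_ge0.
  - move=> a b; split; first by move/d_eq0; exact: svalI.
    by move=> ->; exact: d_xx.
  - by move=> a b; exact: d_sym.
  - by move=> a b c; exact: d_tri.
have ce : coarse_equivalence d e g.
  split.
  - exists (fun t => t - 2 * r), (fun t => t + 2 * r); split.
    + by move=> a b _ ab; rewrite lerD2r.
    + by move=> a b _ ab; rewrite lerD2r.
    + apply/cvgryPge => B.
      near=> t. rewrite lerBrDr. near: t. apply: nbhs_pinfty_ge. exact: num_real.
    + move=> x x'; rewrite /e; apply/andP; split.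
      * have h1 := d_tri x (sval (g x)) x'.
        have h2 := d_tri (sval (g x)) (sval (g x')) x'.
        have h3 := gP x. have h4 := gP x'. rewrite (d_sym (sval (g x'))) in h2.
        lra.
      * have h1 := d_tri (sval (g x)) x (sval (g x')).
        have h2 := d_tri x x' (sval (g x')).
        have h3 := gP x. have h4 := gP x'. rewrite (d_sym (sval (g x)) x) in h1.
        lra.
  - by exists r => y; exists (sval y); rewrite /e; exact: ltW (gP _).
have nbg : ~ bounded_geometry e by move=> bg; exact: (hnb Y e em bg g ce).
move/existsNP: nbg => [rho /not_implyP [rho0 H]].
exists rho; split => // M.
move/forallNP: H => /(_ M) /existsNP [y /existsNP [k /existsNP [f H]]].
move/not_implyP: H => [finj /not_implyP [fball /negP kM]].
rewrite -ltnNge in kM.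
exists (sval y), (fun i => sval (f (widen_ord (ltnW kM) i))); split.
  by move=> i; exact: fball.
move=> i j ij; apply: sN; try exact: (svalP (f _)).
move=> /svalI /finj eq; move: ij; apply/negP; rewrite negbK.
by apply/eqP; apply: val_inj; move: eq => /(congr1 val).
Unshelve. all: by end_near.
Qed.

End Aux.

Lemma arith_aux (n T0 h m r : nat) : ((2 * (T0 + h)).+1 <= n)%N -> (n - T0 = m + r)%N ->
  (r < h)%N -> (T0 + m <= n)%N /\ (n <= 2 * m)%N.
Proof. move=> *; split; lia. Qed.

Section Paths.
Variables (R : realType) (X : Type) (d : X -> X -> R).
Hypothesis hm : is_metric d.
Variables (C A : R).
Hypothesis hC : 1 <= C.
Hypothesis hA : 0 <= A.
Hypothesis hq : forall x x' : X, exists p : R -> X,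
      p 0 = x /\ p (d x x') = x' /\
      forall s t, 0 <= s <= d x x' -> 0 <= t <= d x x' ->
        C^-1 * `|s - t| - A <= d (p s) (p t) <= C * `|s - t| + A.

Definition qp a b := projT1 (cid (hq a b)).
Definition seg a b (t : nat) := qp a b (Num.min t%:R (d a b)).

Lemma qpP a b : qp a b 0 = a /\ qp a b (d a b) = b /\
      forall s t, 0 <= s <= d a b -> 0 <= t <= d a b ->
        C^-1 * `|s - t| - A <= d (qp a b s) (qp a b t) <= C * `|s - t| + A.
Proof. exact: (projT2 (cid (hq a b))). Qed.

Lemma seg0 a b : seg a b 0 = a.
Proof. by rewrite /seg min_l ?d_ge0 //; case: (qpP a b). Qed.

Lemma segE a b t : d a b <= t%:R -> seg a b t = b.
Proof. by move=> h; rewrite /seg min_r //; case: (qpP a b) => _ []. Qed.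

Lemma segS a b t : d (seg a b t) (seg a b t.+1) <= C + A.
Proof.
have [_ [_ H]] := qpP a b.
have D0 := d_ge0 hm a b.
rewrite /seg; set D := d a b.
have t0 : (0 : R) <= t%:R by [].
have eS : (t.+1%:R : R) = t%:R + 1 by rewrite -natr1.
rewrite eS.
have sB (v : R) : 0 <= v -> 0 <= Num.min v D <= D.
  by move=> v0; rewrite le_min v0 D0 /= ge_min lexx orbT.
have /andP [_ h] := H _ _ (sB _ t0) (sB (t%:R + 1) (addr_ge0 t0 ler01)).
apply: (le_trans h); rewrite lerD2r.
have C0 : 0 <= C by apply: le_trans hC.
rewrite -[leRHS]mulr1; apply: ler_wpM2l => //.
have [h1|h1] := leP (t%:R) D; have [h2|h2] := leP (t%:R + 1) D;
  rewrite ler_norml; apply/andP; split; lra.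
Qed.

Lemma count_paths (delta Rr : R) (x0 : X) (M k T0 h n : nat) (z : 'I_M.+1 -> X) :
  C + A <= delta -> 0 < Rr -> (0 < T0)%N -> (0 < h)%N ->
  d x0 (z ord0) <= T0%:R ->
  (forall i j, d (z i) (z j) <= h%:R) ->
  (forall i j, i != j -> Rr <= d (z i) (z j)) ->
  (T0 + k * h <= n)%N ->
  (((M.+1 ^ k)%:R)%:E <= sep_number d n Rr delta x0)%E.
Proof.
move=> hdel Rr0 T00 h0 dx0 zh zsep kn.
pose W (s : {ffun 'I_k -> 'I_M.+1}) (j : nat) : X :=
  if j is j'.+1 then (if insub j' is Some i then z (s i) else z ord0) else z ord0.
have Wz s j : exists i, W s j = z i.
  case: j => [|j] /=; first by exists ord0.
  by case: (insub j) => [i|]; [exists (s i)|exists ord0].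
have Wh s j j' : d (W s j) (W s j') <= h%:R.
  by have [i ->] := Wz s j; have [i' ->] := Wz s j'.
pose blk s (t : nat) := seg (W s (t %/ h)%N) (W s (t %/ h)%N.+1) (t %% h)%N.
pose pth s (t : nat) := if (t < T0)%N then seg x0 (z ord0) t else blk s (t - T0)%N.
have blkstep s t : d (blk s t) (blk s t.+1) <= C + A.
  rewrite /blk (div.divnS t h0) (div.modnS t h); case: ifP => hd.
  - rewrite add1n seg0.
    have e : (t %% h).+1 = h.
      apply/anti_leq; rewrite ltn_pmod //=.
      apply: dvdn_leq => //.
      have := hd; rewrite {1}(divn_eq t h) -addnS dvdn_addr //.
      exact: dvdn_mull.
    have eq : seg (W s (t %/ h)%N) (W s (t %/ h)%N.+1) (t %% h)%N.+1 = W s (t %/ h)%N.+1.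
      by apply: segE; rewrite e; apply: Wh.
    rewrite -[X in d _ X]eq; exact: segS.
  - by rewrite add0n; exact: segS.
have pthstep s t : d (pth s t) (pth s t.+1) <= C + A.
  rewrite /pth; case: (ltnP t.+1 T0) => h1.
  - by rewrite (ltnW h1); exact: segS.
  case: (ltnP t T0) => h2.
  - have e : t.+1 = T0 by apply/anti_leq; rewrite h1 h2.
    rewrite -e subnn /blk div0n mod0n seg0 /=.
    have eq : seg x0 (z ord0) t.+1 = z ord0 by apply: segE; rewrite e.
    rewrite -[X in d _ X]eq; exact: segS.
  - rewrite subSn //.
have pth0 s : pth s 0 = x0 by rewrite /pth T00 seg0.
have pthz s (a : 'I_k) : pth s (T0 + a.+1 * h) = z (s a).
  rewrite /pth ltnNge leq_addr /= addKn /blk mulnK // modnMl seg0 /=.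
  by rewrite valK.
have cardF : (M.+1 ^ k = #|{ffun 'I_k -> 'I_M.+1}|)%N by rewrite card_ffun !card_ord.
pose F (i : 'I_(M.+1 ^ k)) : {ffun 'I_k -> 'I_M.+1} := enum_val (cast_ord cardF i).
have Finj : injective F by move=> i j /enum_val_inj /cast_ord_inj.
pose P (i : 'I_(M.+1 ^ k)) (j : 'I_n.+1) : X := pth (F i) j.
have sepP i j : i != j -> Rr <= path_dist d (P i) (P j).
  move=> ij.
  have [a ha] : exists a, F i a != F j a.
    apply: contrapT => H; move: ij; apply/negP; rewrite negbK; apply/eqP.
    apply: Finj; apply/ffunP => a; apply/eqP; apply/negPn/negP => hne.
    by apply: H; exists a.
  have tn : (T0 + a.+1 * h < n.+1)%N.
    rewrite ltnS; apply: leq_trans kn; rewrite leq_add2l leq_mul2r ltn_ord orbT //.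
  apply: le_trans (le_bigmax _ _ (Ordinal tn)).
  by rewrite /P /= !pthz; apply: zsep.
apply: ereal_sup_ubound; exists (M.+1 ^ k)%N => //.
exists P; split.
- move=> i j eq; apply/eqP; apply: contraT => ij.
  have := sepP i j ij; rewrite eq.
  suff : path_dist d (P j) (P j) <= 0 by move=> h1 h2; have := le_trans h2 h1; rewrite leNgt Rr0.
  by apply/bigmax_leP; split => // l _; rewrite d_xx.
- move=> j; split; first by rewrite /P /= pth0.
  by move=> i; rewrite /P /=; apply: le_trans hdel; exact: pthstep.
- exact: sepP.
Qed.

Lemma entropy_inf :
  (forall (Y : Type) (e : Y -> Y -> R), is_metric e -> bounded_geometry e ->
     forall f : X -> Y, ~ coarse_equivalence d e f) ->
  forall (delta Rr : R) (x0 : X), C + A <= delta -> 0 < Rr ->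
  limn_esup (fun n : nat => (((n%:R)^-1)%:E * elog (sep_number d n Rr delta x0))%E) = +oo%E.
Proof.
move=> hnb delta Rr x0 hdel Rr0.
set u := fun n : nat => _.
suff cu : u x @[x --> \oo] --> +oo%E by have [_ ->] := cvg_limn_einf_sup cu.
apply/cvgeyPge => B.
pose B' := Num.max B 1.
have BB' : B <= B' by rewrite le_max lexx.
have B'1 : 1 <= B' by rewrite le_max lexx orbT.
have [rho [rho0 Hr]] := key_sep hm hnb Rr Rr0.
have [h1 hh1] := @nat_above _ (2 * rho).
pose h := h1.+1.
have hh : 2 * rho <= h%:R by apply: le_trans hh1 _; rewrite ler_nat.
have [m1 hm1] := @nat_above _ (expR (2 * h%:R * B')).
have [x [z [zb zs]]] := Hr m1.
case: m1 hm1 z zb zs => [|M] hm1 z zb zs.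
  by have := expR_gt0 (2 * h%:R * B'); rewrite ltNge hm1.
have [t1 ht1] := @nat_above _ (d x0 (z ord0)).
pose T0 := t1.+1.
have hT0 : d x0 (z ord0) <= T0%:R by apply: le_trans ht1 _; rewrite ler_nat.
have zh i j : d (z i) (z j) <= h%:R.
  apply: le_trans (d_tri hm (z i) x (z j)) _; rewrite (d_sym hm (z i) x).
  have q1 := zb i; have q2 := zb j; lra.
exists (2 * (T0 + h)).+1 => // n /= hn.
have h0 : (0 < h)%N by [].
have [k [rm [eqn rlt]]] : exists k rm, (n - T0 = k * h + rm)%N /\ (rm < h)%N.
  by exists ((n - T0) %/ h)%N, ((n - T0) %% h)%N; split; [exact: divn_eq | exact: ltn_pmod].
have [kn k2] := @arith_aux _ _ _ _ _ hn eqn rlt.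
have cnt := count_paths delta Rr x0 k T0 h n z hdel Rr0 (isT : (0 < T0)%N) h0 hT0 zh zs kn.
rewrite /u.
have n0 : (0 : R) < n%:R by rewrite ltr0n; exact: leq_ltn_trans (leq0n _) hn.
move: cnt; case: (sep_number d n Rr delta x0) => [r| |] cnt /=.
- rewrite lee_fin.
  have Mk0 : (0 : R) < (M.+1 ^ k)%:R by rewrite ltr0n expn_gt0.
  rewrite lee_fin in cnt.
  have r0 : 0 < r by apply: lt_le_trans cnt.
  have lnr : ln ((M.+1 ^ k)%:R) <= ln r by rewrite ler_ln ?posrE.
  rewrite natrX lnXn // in lnr.
  have lnM : 2 * h%:R * B' <= ln (M.+1%:R : R).
    by rewrite -[leLHS]expRK ler_ln ?posrE ?expR_gt0.
  have k2r : (n%:R : R) <= 2 * (k%:R * h%:R) by rewrite -natrM -(natrM _ 2) ler_nat.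
  rewrite ler_pdivlMl //.
  have kk : (0 : R) <= k%:R by [].
  have hB : n%:R * B <= n%:R * B' by rewrite ler_wpM2l // ltW.
  apply: le_trans hB _; apply: le_trans lnr.
  rewrite -mulr_natr.
  nra.
- by rewrite gt0_muley ?leey // lte_fin invr_gt0.
- by rewrite leeNy_eq in cnt.
Qed.

End Paths.
Unset Implicit Arguments.

Theorem mainTheorem19 (R : realType) (X : Type) (d : X -> X -> R) :
  is_metric d -> quasigeodesic d ->
  (forall (Y : Type) (e : Y -> Y -> R), is_metric e -> bounded_geometry e ->
     forall f : X -> Y, ~ coarse_equivalence d e f) ->
  forall x0 : X, coarse_entropy d x0 = +oo%E.
Proof.
move=> hm [C [A [hC [hA hq]]]] hnb x0.
rewrite /coarse_entropy.
apply: (cvg_lim (@ereal_hausdorff R)).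
apply: cvg_near_cst.
near=> delta.
apply: (cvg_lim (@ereal_hausdorff R)).
apply: cvg_near_cst.
near=> Rr.
apply: (entropy_inf hm C A hC hq hnb).
- near: delta. apply: nbhs_pinfty_ge. exact: num_real.
- near: Rr. apply: nbhs_pinfty_gt. exact: num_real.
Unshelve. all: by end_near.
Qed.
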